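(* $\mathrm{Sort}(\mathrm{SC}_{3\underline{21}})$ is a permutation class.
   Context: $\mathfrak S_n$ is the set of permutations of $\{1,\dots,n\}$. A permutation $\pi$ contains a (classical) permutation $\tau$ if some subsequence of $\pi$ has the same relative order as $\tau$. A permutation class is a set $\Pi$ of permutations such that every permutation contained in some $\pi\in\Pi$ is also in $\Pi$. A vincular pattern is a permutation with some entries underlined; a sequence contains it if it has a subsequence with the same relative order in which entries corresponding to adjacent underlined entries occupy consecutive positions. An occurrence of $3\underline{21}$ is $a_i a_j a_{j+1}$ with $i<j$ and $a_{j+1}<a_j<a_i$. For a pattern $\sigma$, the map $\mathrm{SC}_\sigma$ acts on $\tau$: read entries left to right; when the next entry $x$ is read, if pushing $x$ yields a stack whose entries read top to bottom (stack adjacency = consecutive positions) avoid $\sigma$, push $x$; otherwise pop the top stack entry to the output and repeat. At the end pop all remaining entries; the output is $\mathrm{SC}_\sigma(\tau)$. West's stack-sorting map is $s=\mathrm{SC}_{21}$. $\mathrm{Sort}_n(\mathrm{SC}_\sigma)=\{\tau\in\mathfrak S_n : s(\mathrm{SC}_\sigma(\tau))=12\cdots n\}$ and $\mathrm{Sort}(\mathrm{SC}_\sigma)=\bigcup_{n\ge1}\mathrm{Sort}_n(\mathrm{SC}_\sigma)$. *)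

(* Defs.v *)
From mathcomp Require Import all_boot.
Set Implicit Arguments. Unset Strict Implicit. Unset Printing Implicit Defensive.

Definition is_perm (s : seq nat) : bool := perm_eq s (iota 1 (size s)).

Definition order_iso (a b : seq nat) : bool :=
  (size a == size b) &&
  all (fun i => all (fun j => (nth 0 a i < nth 0 a j) == (nth 0 b i < nth 0 b j))
                    (iota 0 (size a))) (iota 0 (size a)).

Fixpoint all_subseqs (l : seq nat) : seq (seq nat) :=
  match l with
  | [::] => [:: [::]]
  | x :: l' => let r := all_subseqs l' in [seq x :: t | t <- r] ++ r
  end.

(* A vincular pattern: a permutation p together with a bit u_j for each entry
   telling whether entry j is underlined.  [idx] is an occurrence of (p,u) in s:
   increasing positions, same relative order, and whenever entries j, j+1 of p
   are both underlined, the corresponding positions are consecutive. *)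
Definition vocc (s p : seq nat) (u : seq bool) (idx : seq nat) : bool :=
  [&& size idx == size p, sorted ltn idx, all (fun i => i < size s) idx,
      order_iso (map (nth 0 s) idx) p &
      all (fun j => (nth false u j && nth false u j.+1) ==>
                    (nth 0 idx j.+1 == (nth 0 idx j).+1))
          (iota 0 (size p).-1)].

Definition vcontains (s p : seq nat) (u : seq bool) : bool :=
  has (vocc s p u) (all_subseqs (iota 0 (size s))).

(* classical containment: no underlined entries *)
Definition contains (s p : seq nat) : bool := vcontains s p [::].

(* SC_(p,u): the pattern-avoiding stack machine.  The stack is a list whose head
   is the top.  Reading x: if x :: st avoids the pattern, push; else pop the top
   to the output and repeat. *)
Fixpoint push_loop (p : seq nat) (u : seq bool) (x : nat) (st out : seq nat)
  : seq nat * seq nat :=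
  if ~~ vcontains (x :: st) p u then (x :: st, out) else
  match st with
  | [::] => ([:: x], out)
  | y :: st' => push_loop p u x st' (rcons out y)
  end.

Definition SC (p : seq nat) (u : seq bool) (tau : seq nat) : seq nat :=
  let: (st, out) :=
    foldl (fun acc x => push_loop p u x acc.1 acc.2) ([::], [::]) tau in
  out ++ st.

Definition west_s (tau : seq nat) : seq nat := SC [:: 2; 1] [::] tau.

Definition SC_3_21 (tau : seq nat) : seq nat := SC [:: 3; 2; 1] [:: false; true; true] tau.

Definition Sort_SC (p : seq nat) (u : seq bool) (tau : seq nat) : Prop :=
  0 < size tau /\ is_perm tau /\ west_s (SC p u tau) = iota 1 (size tau).

Definition perm_class (P : seq nat -> Prop) : Prop :=
  (forall pi, P pi -> 0 < size pi /\ is_perm pi) /\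
  (forall pi tau, P pi -> 0 < size tau -> is_perm tau -> contains pi tau -> P tau).

(* Main.v *)
Require Import Defs.
From mathcomp Require Import all_boot zify.
From Stdlib Require Import Classical.
Set Implicit Arguments. Unset Strict Implicit. Unset Printing Implicit Defensive.

Lemma mem_all_subseqs (x l : seq nat) : (x \in all_subseqs l) = subseq x l.
Proof.
elim: l x => [|y l IH] x /=.
  by case: x.
rewrite mem_cat IH.
case: x => [|z x'] /=.
  rewrite sub0seq orbT; done.
case: (z =P y) => [->|ne].
  rewrite mem_map; last by move=> a b [].
  rewrite IH.
  apply/idP/idP => [/orP[//|]|->//].
  move/(subseq_trans (subseq_cons x' y)) => //.
have -> : (z :: x' \in [seq y :: t | t <- all_subseqs l]) = false.
  by apply/negbTE/negP => /mapP [t _ [e _]].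
done.
Qed.

Lemma sorted_subseq_iota (idx : seq nat) m n :
  sorted ltn idx -> all (fun i => m <= i < m + n) idx -> subseq idx (iota m n).
Proof.
elim: n m idx => [|n IH] m idx.
  case: idx => //= i idx _ /andP[/andP[h1 h2] _]; rewrite addn0 in h2.
  by move: (leq_trans h2 h1); rewrite ltnn.
case: idx => [|i idx] //= Hs /andP[/andP[h1 h2] Ha].
have Hall : all (ltn i) idx.
  exact: (order_path_min ltn_trans Hs).
have Hs' : sorted ltn idx by move: Hs => /path_sorted.
case: (i =P m) => [e|ne].
  subst i; apply: IH => //.
  apply/allP => j hj; move/allP: Ha => /(_ j hj) /andP[_ hj2].
  move/allP: Hall => /(_ j hj) /= hj1.
  by rewrite hj1 addSnnS.
have him : m < i by rewrite ltn_neqAle h1 andbT; apply/eqP => e; apply: ne.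
apply: IH => //=.
rewrite him /= addSnnS h2 /=.
apply/allP => j hj; move/allP: Ha => /(_ j hj) /andP[_ hj2].
move/allP: Hall => /(_ j hj) /= hj1.
by rewrite hj2 andbT (leq_trans him (ltnW hj1)).
Qed.

Lemma vcontainsP s p u : reflect (exists idx, vocc s p u idx) (vcontains s p u).
Proof.
apply: (iffP hasP) => [[idx _ h]|[idx h]]; first by exists idx.
exists idx => //.
rewrite mem_all_subseqs.
move: h => /and5P [_ hs ha _ _].
apply: sorted_subseq_iota => //.
Qed.

Lemma oi3 a b c : a < b < c -> order_iso [:: c; b; a] [:: 3; 2; 1].
Proof.
move=> /andP [ab bc]; have ac := ltn_trans ab bc.
have h1 : (b < a) = false by rewrite ltnNge (ltnW ab).
have h2 : (c < b) = false by rewrite ltnNge (ltnW bc).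
have h3 : (c < a) = false by rewrite ltnNge (ltnW ac).
by rewrite /order_iso /= !ltnn ab bc ac h1 h2 h3.
Qed.

Lemma nth_cat_size (M1 M2 : seq nat) b : nth 0 (M1 ++ b :: M2) (size M1) = b.
Proof. by rewrite nth_cat ltnn subnn. Qed.

Lemma nth_cat_size1 (M1 M2 : seq nat) b a : nth 0 (M1 ++ b :: a :: M2) (size M1).+1 = a.
Proof. by rewrite nth_cat ltnNge leqnSn /= subSnn. Qed.

Lemma bad321P L : vcontains L [::3;2;1] [::false;true;true] <->
  exists M1 b a M2 c, L = M1 ++ b :: a :: M2 /\ c \in M1 /\ a < b < c.
Proof.
split.
  move/vcontainsP => [idx /and5P [hsz hs ha ho hadj]].
  case: idx hsz hs ha ho hadj => [|i [|j [|k [|? ?]]]] //= _.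
  move=> /and3P [hij hjk _] /and4P [hi hj hk _].
  rewrite /order_iso /=.
  move=> /and4P [_ /and4P [h1 _ _ _] /and4P [_ h2 _ _] _] /andP [/eqP ek _].
  have e1 : nth 0 L j < nth 0 L i by move/eqP: h1 => ->.
  have e2 : nth 0 L k < nth 0 L j by move/eqP: h2 => ->.
  subst k.
  exists (take j L), (nth 0 L j), (nth 0 L j.+1), (drop j.+2 L), (nth 0 L i).
  split; first by rewrite -(drop_nth 0 hk) -(drop_nth 0 hj) cat_take_drop.
  split; last by rewrite e1 e2.
  have hi' : i < size (take j L) by rewrite size_take hj.
  by rewrite -(nth_take 0 hij); apply: mem_nth.
move=> [M1 [b [a [M2 [c [-> [hc habc]]]]]]].
apply/vcontainsP; exists [:: index c M1; size M1; (size M1).+1].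
rewrite /vocc /= size_cat /= ltnSn andbT.
rewrite index_mem hc /=.
have hs : size M1 < size M1 + (size M2).+2 by rewrite -addn1 leq_add2l.
have hi : index c M1 < size M1 by rewrite index_mem.
rewrite hs (ltn_trans hi hs) /= eqxx andbT.
have -> : (size M1).+1 < size M1 + (size M2).+2 by rewrite -addn2 leq_add2l.
rewrite /= nth_cat_size nth_cat_size1 nth_cat hi nth_index //.
by rewrite andbT; apply: oi3.
Qed.

Lemma oi2 a b : a < b -> order_iso [:: b; a] [:: 2; 1].
Proof.
move=> ab; have h1 : (b < a) = false by rewrite ltnNge (ltnW ab).
by rewrite /order_iso /= !ltnn ab h1.
Qed.

Lemma bad21E L : vcontains L [::2;1] [::] = ~~ pairwise leq L.
Proof.
apply/idP/idP.
  move/vcontainsP => [idx /and5P [hsz hs ha ho hadj]].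
  case: idx hsz hs ha ho hadj => [|i [|j [|? ?]]] //= _.
  move=> /andP [hij _] /and3P [hi hj _].
  rewrite /order_iso /= => /and3P [_ /and3P [h1 _ _] _] _.
  have e1 : nth 0 L j < nth 0 L i by move/eqP: h1 => ->.
  apply/negP => /(pairwiseP 0) h.
  have := h i j hi hj hij.
  by rewrite leqNgt e1.
move=> hn; case hv: (vcontains _ _ _) => //; case/negP: hn.
apply/(pairwiseP 0) => i j hi hj hij.
rewrite leqNgt; apply/negP => hlt; move/negP: hv; case.
apply/vcontainsP; exists [:: i; j].
have hi' : i < size L := hi. have hj' : j < size L := hj.
rewrite /vocc /= hij hi' hj' /=.
by rewrite andbT oi2.
Qed.

Definition stepf p u (acc : seq nat * seq nat) x := push_loop p u x acc.1 acc.2.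

Lemma SCE p u tau : SC p u tau =
  (foldl (stepf p u) ([::],[::]) tau).2 ++ (foldl (stepf p u) ([::],[::]) tau).1.
Proof. rewrite /SC -/(stepf p u). by case: foldl. Qed.

Lemma push_loopE p u x st out : exists k, [/\ k <= size st,
  push_loop p u x st out = (x :: drop k st, out ++ take k st),
  (forall i, i < k -> vcontains (x :: drop i st) p u) &
  (k < size st -> ~~ vcontains (x :: drop k st) p u)].
Proof.
elim: st out => [|y st IH] out /=.
  exists 0; split => //; first by case: ifP; rewrite cats0.
case: ifP => hv.
  by exists 0; split => //; rewrite drop0 take0 cats0.
have [k [hk e hi hn]] := IH (rcons out y).
exists k.+1; split => //.
- by rewrite e /= cat_rcons.
- case => [|i] hik; first by rewrite drop0; move/negbFE: hv.
  exact: hi.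
Qed.

Lemma foldG p u r st out : exists R,
  (foldl (stepf p u) (st,out) r).2 = out ++ R /\
  perm_eq (R ++ (foldl (stepf p u) (st,out) r).1) (st ++ r).
Proof.
elim: r st out => [|x r IH] st out /=.
  by exists [::]; rewrite cats0 cats0.
have [k [hk e _ _]] := push_loopE p u x st out.
rewrite /stepf /= e -/(stepf p u).
have [R [e1 e2]] := IH (x :: drop k st) (out ++ take k st).
exists (take k st ++ R); rewrite e1 catA; split => //.
rewrite -catA.
apply: (perm_trans (_ : perm_eq _ (take k st ++ ((x :: drop k st) ++ r)))); first by rewrite perm_cat2l.
rewrite -{3}(cat_take_drop k st) -catA perm_cat2l /=.
by rewrite -cat1s perm_catCA.
Qed.

Lemma pairwise_leq_drop n (s : seq nat) : pairwise leq s -> pairwise leq (drop n s).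
Proof. rewrite -!(sorted_pairwise leq_trans); exact: drop_sorted. Qed.

Lemma westE x st out : pairwise leq st -> exists k, [/\ k <= size st,
  push_loop [::2;1] [::] x st out = (x :: drop k st, out ++ take k st),
  pairwise leq (x :: drop k st) & all (fun y => y < x) (take k st)].
Proof.
move=> hs.
have [k [hk e hi hn]] := push_loopE [::2;1] [::] x st out.
exists k; split => //.
  case: (ltnP k (size st)) => hk'.
    by move: (hn hk'); rewrite bad21E negbK.
  by rewrite drop_oversize.
apply/allP => y hy.
have hiy : index y (take k st) < size (take k st) by rewrite index_mem.
have hsz : size (take k st) = k by rewrite size_take_min; apply/minn_idPl.
rewrite hsz in hiy.
have ey : y = nth 0 st (index y (take k st)).
  by rewrite -(nth_take 0 hiy) nth_index.
set i := index y (take k st) in hiy ey.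
have := hi i hiy; rewrite bad21E /= (pairwise_leq_drop i hs) andbT.
have his : i < size st by apply: leq_trans hiy hk.
rewrite (drop_nth 0 his) /= => /nandP [].
  by rewrite -ltnNge ey.
move/allPn => [z hz]; rewrite -ltnNge => hzx.
have := pairwise_leq_drop i hs; rewrite (drop_nth 0 his) /= => /andP [/allP /(_ z hz) hyz _].
by rewrite ey; apply: leq_ltn_trans hyz hzx.
Qed.

Lemma west_inv r st out : pairwise leq st ->
  pairwise leq (foldl (stepf [::2;1] [::]) (st, out) r).1.
Proof.
elim: r st out => [|x r IH] st out //= hs.
have [k [_ e hp _]] := westE x out hs.
by rewrite /stepf /= e -/(stepf _ _); apply: IH.
Qed.

Lemma subseq_cons_split (x : nat) s t : subseq (x :: s) t ->
  exists t1 t2, t = t1 ++ x :: t2 /\ subseq s t2.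
Proof.
elim: t => [|y t IH] //=.
case: eqP => [<- hs|ne hs].
  by exists [::], t.
have [t1 [t2 [-> h]]] := IH hs.
by exists (y :: t1), t2.
Qed.

Lemma west_bad w b c a : subseq [:: b; c; a] w -> a < b < c -> ~~ sorted ltn (west_s w).
Proof.
move=> hsub /andP [ab bc].
have [w0 [t [ew hs1]]] := subseq_cons_split hsub.
have [w1 [w2 [et hs2]]] := subseq_cons_split hs1.
have ha : a \in w2 by rewrite -sub1seq.
subst w t.
rewrite /west_s SCE.
have -> : w0 ++ b :: w1 ++ c :: w2 = (w0 ++ b :: w1) ++ c :: w2 by rewrite -catA.
rewrite foldl_cat.
set P := w0 ++ b :: w1.
case E: (foldl (stepf [::2;1] [::]) ([::],[::]) P) => [st out].
have hinv : pairwise leq st.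
  by have := @west_inv P [::] [::] isT; rewrite E.
have hb : b \in out ++ st.
  have [R [e1 e2]] := foldG [::2;1] [::] P [::] [::]; rewrite E /= in e1 e2.
  by subst out; rewrite (perm_mem e2) /P mem_cat inE eqxx orbT.
have [k [_ e hp _]] := westE c out hinv.
rewrite /= /stepf /= e -/(stepf _ _).
have hb2 : b \in out ++ take k st.
  move: hb; rewrite !mem_cat -{1}(cat_take_drop k st) mem_cat orbA.
  case/orP => // hbd.
  move: hp => /= /andP [/allP /(_ b hbd) hcb _].
  by move: (leq_ltn_trans hcb bc); rewrite ltnn.
have [R [e1 e2]] := foldG [::2;1] [::] w2 (c :: drop k st) (out ++ take k st).
rewrite e1 -catA.
have ha2 : a \in R ++ (foldl (stepf [::2;1] [::]) (c :: drop k st, out ++ take k st) w2).1.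
  by rewrite (perm_mem e2) mem_cat ha orbT.
rewrite (sorted_pairwise ltn_trans) pairwise_cat.
apply/negP => /and3P [/allrelP /(_ b a hb2 ha2) hba _ _].
by move: (ltn_trans ab hba); rewrite ltnn.
Qed.

Lemma pairwise_ltn_leq (s : seq nat) : pairwise ltn s -> pairwise leq s.
Proof. by apply: sub_pairwise => a b /ltnW. Qed.

Lemma pairwise_ltn_drop n (s : seq nat) : pairwise ltn s -> pairwise ltn (drop n s).
Proof. rewrite -!(sorted_pairwise ltn_trans); exact: drop_sorted. Qed.

Lemma pairwise_ltn_take n (s : seq nat) : pairwise ltn s -> pairwise ltn (take n s).
Proof. rewrite -!(sorted_pairwise ltn_trans); exact: take_sorted. Qed.

Lemma west_good_inv w rest : forall s st out, w = s ++ rest -> uniq w ->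
  (forall b c a, subseq [::b;c;a] w -> ~~ (a < b < c)) ->
  pairwise ltn st -> pairwise ltn out -> allrel ltn out (st ++ rest) ->
  perm_eq (out ++ st) s ->
  pairwise ltn ((foldl (stepf [::2;1] [::]) (st, out) rest).2 ++
                (foldl (stepf [::2;1] [::]) (st, out) rest).1).
Proof.
elim: rest => [|x rest IH] s st out ew hu h231 hst hout hall hperm /=.
  by rewrite cats0 in hall; rewrite pairwise_cat hall hst hout.
have [k [_ e hp htk]] := westE x out (pairwise_ltn_leq hst).
rewrite /stepf /= e -/(stepf _ _).
have hu' := hu; rewrite ew cat_uniq /= in hu'.
move: hu' => /and3P [hus /norP [hxs hns] /andP [hxr hur]].
have memst : forall y, y \in st -> y \in s.
  by move=> y hy; rewrite -(perm_mem hperm) mem_cat hy orbT.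
have memout : forall y, y \in out -> y \in s.
  by move=> y hy; rewrite -(perm_mem hperm) mem_cat hy.
have hst_ta := hst; rewrite -(cat_take_drop k st) pairwise_cat in hst_ta.
move: hst_ta => /and3P [/allrelP htd _ _].
apply: (IH (rcons s x)).
- by rewrite ew cat_rcons.
- by [].
- by [].
- rewrite /= pairwise_ltn_drop // andbT.
  apply/allP => y hy.
  move: hp => /= /andP [/allP /(_ y hy) hxy _].
  rewrite ltn_neqAle hxy andbT.
  apply/eqP => exy; subst y.
  by move: hxs; rewrite memst // (mem_drop hy).
- rewrite pairwise_cat hout pairwise_ltn_take // andbT.
  rewrite andbT; apply/allrelP => o y ho hy.
  by move/allrelP: hall; apply => //; rewrite mem_cat (mem_take hy).
- apply/allrelP => o y.
  rewrite mem_cat => /orP [ho|ho].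
    move=> hy; move/allrelP: hall; apply => //.
    move: hy; rewrite /= in_cons mem_cat mem_cat in_cons => /orP [->|/orP [hy|->]]; rewrite ?orbT //.
    by rewrite (mem_drop hy).
  rewrite /= inE mem_cat => /orP [/eqP ->|/orP [hy|hy]].
  + by move/allP: htk; apply.
  + exact: htd.
  + have hos : o \in s by apply: memst; apply: mem_take ho.
    have hox : o < x by move/allP: htk; apply.
    have hsub : subseq [:: o; x; y] w.
      rewrite ew -cat1s; apply: cat_subseq; first by rewrite sub1seq.
      by rewrite /= eqxx sub1seq.
    have := h231 _ _ _ hsub; rewrite hox andbT -leqNgt leq_eqVlt => /orP [/eqP eoy|//].
    subst y; move/hasPn: hns => /(_ o hy).
    by rewrite hos.
- rewrite perm_sym perm_rcons perm_sym -catA.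
  apply: (@perm_trans _ (x :: out ++ st)); last by rewrite perm_cons.
  by rewrite catA -cat1s perm_catCA /= perm_cons -catA cat_take_drop.
Qed.

Lemma west_good w : uniq w ->
  (forall b c a, subseq [::b;c;a] w -> ~~ (a < b < c)) -> sorted ltn (west_s w).
Proof.
move=> hu h.
rewrite /west_s SCE (sorted_pairwise ltn_trans).
by apply: (@west_good_inv w w [::]).
Qed.

Definition bad3 L := vcontains L [::3;2;1] [::false;true;true].
Definition has12_3 (s : seq nat) := exists M1 a b M2 c,
  s = M1 ++ a :: b :: M2 /\ c \in M2 /\ a < b < c.
Definition has231 (w : seq nat) := exists b c a, subseq [:: b; c; a] w /\ a < b < c.

Lemma bad3_single x : ~~ bad3 [:: x].
Proof.
apply/negP => /bad321P [M1 [b [a [M2 [c [e [hc _]]]]]]].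
case: M1 e hc => [|m [|m2 M1]] //= [].
Qed.

Lemma bad3_drop i L : bad3 (drop i L) -> bad3 L.
Proof.
move/bad321P => [M1 [b [a [M2 [c [e [hc h]]]]]]].
apply/bad321P; exists (take i L ++ M1), b, a, M2, c.
by rewrite -catA -e cat_take_drop mem_cat hc orbT.
Qed.

Lemma bad3_three x y L : bad3 (x :: y :: L) -> ~~ bad3 (x :: L) -> ~~ bad3 (y :: L) ->
  exists t L', L = t :: L' /\ t < y < x.
Proof.
move/bad321P => [M1 [b [a [M2 [c [e [hc h]]]]]]] h1 h2.
case: M1 e hc => [|m [|m2 M1]] //=.
  case=> em eb eL; subst; rewrite inE => /eqP ec; subst.
  by exists a, M2.
case=> em em2 eL; subst; rewrite !inE => /or3P [/eqP ec|/eqP ec|hc].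
- case/negP: h1; apply/bad321P; exists (m :: M1), b, a, M2, c.
  by split => //; split => //; rewrite ec inE eqxx.
- case/negP: h2; apply/bad321P; exists (m2 :: M1), b, a, M2, c.
  by split => //; split => //; rewrite ec inE eqxx.
- case/negP: h1; apply/bad321P; exists (m :: M1), b, a, M2, c.
  by split => //; split => //; rewrite inE hc orbT.
Qed.

Lemma sc_step x st out : ~~ bad3 st -> exists k, [/\
  push_loop [::3;2;1] [::false;true;true] x st out = (x :: drop k st, out ++ take k st),
  ~~ bad3 (x :: drop k st),
  (bad3 (x :: st) -> has231 (out ++ take k st ++ x :: drop k st)) &
  (~~ bad3 (x :: st) -> k = 0)].
Proof.
move=> hst.
have [k [hk e hi hn]] := push_loopE [::3;2;1] [::false;true;true] x st out.
have hnk : ~~ bad3 (x :: drop k st).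
  case: (ltnP k (size st)) => hk'; first exact: hn hk'.
  by rewrite drop_oversize // bad3_single.
have hk0 : ~~ bad3 (x :: st) -> k = 0.
  case: k {e hk hn hnk} hi => [//|k] hi hb.
  by move: (hi 0 isT); rewrite drop0 => h; move/negP: hb.
exists k; split => // hb.
case: k {hk0} hk e hi hn hnk => [|j] hk e hi hn hnk.
  by move: hnk; rewrite drop0 hb.
have hj : j < size st by [].
have hbj := hi j (ltnSn j).
rewrite (drop_nth 0 hj) in hbj.
have hny : ~~ bad3 (nth 0 st j :: drop j.+1 st).
  apply/negP => hb2; case/negP: hst; apply: (bad3_drop (i:=j)).
  by rewrite (drop_nth 0 hj).
have [t [L' [eL ht]]] := bad3_three hbj hnk hny.
exists (nth 0 st j), x, t; split => //.
rewrite (take_nth 0 hj) eL cat_rcons catA.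
rewrite -(cat0s [:: nth 0 st j; x; t]); apply: cat_subseq; first exact: sub0seq.
by rewrite /= !eqxx sub0seq.
Qed.

Lemma rev_split (M1 M2 : seq nat) b a :
  rev (M1 ++ b :: a :: M2) = rev M2 ++ a :: b :: rev M1.
Proof. by rewrite rev_cat !rev_cons -!cats1 -!catA. Qed.

Lemma bad3_rev t : bad3 (rev t) <-> has12_3 t.
Proof.
split.
  move/bad321P => [M1 [b [a [M2 [c [e [hc h]]]]]]].
  exists (rev M2), a, b, (rev M1), c.
  by rewrite -(revK t) e rev_split mem_rev.
move=> [M1 [a [b [M2 [c [e [hc h]]]]]]].
apply/bad321P; exists (rev M2), b, a, (rev M1), c.
by rewrite e rev_split mem_rev.
Qed.

Lemma has231_ext (out st T : seq nat) x :
  has231 (out ++ st) -> (exists k, T = out ++ take k st ++ x :: drop k st) -> has231 T.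
Proof.
move=> [b [c [a [hs h]]]] [k ->]; exists b, c, a; split => //.
apply: subseq_trans hs _.
rewrite -{1}(cat_take_drop k st).
apply: cat_subseq; first exact: subseq_refl.
apply: cat_subseq; first exact: subseq_refl.
exact: subseq_cons.
Qed.

Lemma has12_3_rcons s x : has12_3 s -> has12_3 (rcons s x).
Proof.
move=> [M1 [a [b [M2 [c [e [hc h]]]]]]].
exists M1, a, b, (rcons M2 x), c.
by rewrite e rcons_cat /= mem_rcons inE hc orbT.
Qed.

Definition S3 := stepf [::3;2;1] [::false;true;true].

Lemma sc_inv tau :
  ~~ bad3 (foldl S3 ([::],[::]) tau).1 /\
  (~ has12_3 tau -> foldl S3 ([::],[::]) tau = (rev tau, [::])) /\
  (has12_3 tau -> has231 ((foldl S3 ([::],[::]) tau).2 ++ (foldl S3 ([::],[::]) tau).1)).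
Proof.
elim/last_ind: tau => [|s x [IH1 [IH2 IH3]]].
  split; first by apply/negP => /bad321P [[|? ?] [? [? [? [? [? [? ?]]]]]]].
  split => // [[M1 [a [b [M2 [c [e _]]]]]]]; by case: M1 e.
rewrite foldl_rcons.
case E: (foldl S3 ([::], [::]) s) IH1 IH2 IH3 => [st out] /= IH1 IH2 IH3.
have [k [e hn hb h0]] := sc_step x out IH1.
rewrite /S3 /stepf /= e /=.
split => //.
have [h|h] := classic (has12_3 s).
  have hr := has12_3_rcons x h.
  split => // _.
  by apply: (has231_ext (IH3 h)); exists k; rewrite catA.
have [es eo] : st = rev s /\ out = [::] by case: (IH2 h).
subst st out.
split.
  move=> hn2.
  have hnb : ~~ bad3 (x :: rev s).
    by apply/negP; rewrite -rev_rcons => /bad3_rev.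
  by rewrite (h0 hnb) drop0 take0 rev_rcons.
move=> hr; apply: hb.
by rewrite -rev_rcons; apply/bad3_rev.
Qed.

Definition Pgood (t : seq nat) := forall x y z, subseq [:: x; y; z] t -> ~~ ((x < y) && (x < z)).

Lemma sub3_split (x y z : nat) A B C D : subseq [:: x; y; z] (A ++ x :: B ++ y :: C ++ z :: D).
Proof.
rewrite -(cat0s [:: x; y; z]); apply: cat_subseq; first exact: sub0seq.
rewrite /= eqxx -(cat0s [:: y; z]); apply: cat_subseq; first exact: sub0seq.
rewrite /= eqxx -(cat0s [:: z]); apply: cat_subseq; first exact: sub0seq.
by rewrite sub1seq mem_head.
Qed.

Lemma sub2_uniq (a b : nat) t : uniq t -> subseq [:: a; b] t -> a != b.
Proof.
by move=> hu hs; have := subseq_uniq hs hu; rewrite /= inE andbT.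
Qed.

Lemma L123_ind t A x z : uniq t -> forall B y C, t = A ++ x :: B ++ y :: C -> z \in C ->
  x < y < z -> has12_3 t \/ exists a b c, subseq [:: a; c; b] t /\ a < b < c.
Proof.
move=> hu B; elim/last_ind: B => [|B w IH] y C et hz /andP [hxy hyz].
  left; exists A, x, y, C, z; by rewrite et hz hxy hyz.
have et' : t = (A ++ x :: B) ++ w :: y :: C by rewrite et -catA /= cat_rcons.
case: (ltnP w y) => hwy.
  left; exists (A ++ x :: B), w, y, C, z; by rewrite et' hz hwy hyz.
have hwy' : w != y.
  apply: (sub2_uniq hu); rewrite et' -(cat0s [:: w; y]).
  by apply: cat_subseq; [exact: sub0seq | rewrite /= !eqxx sub0seq].
have hyw : y < w by rewrite ltn_neqAle eq_sym hwy' hwy.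
have hz' : z \in y :: C by rewrite inE hz orbT.
have et2 : t = A ++ x :: rcons B w ++ y :: C by [].
case/splitPr: hz et et' et2 => C1 C2 et et' et2.
have hsub : subseq [:: x; w; z] t.
  by rewrite et' -catA /=; apply: (sub3_split x w z A B (y :: C1) C2).
case: (ltngtP w z) => hwz.
- apply: (IH w (y :: C1 ++ z :: C2)) => //.
  + by rewrite et -cats1 -catA.
  + by rewrite inE mem_cat inE eqxx !orbT.
  + by rewrite (ltn_trans hxy hyw) hwz.
- right; exists x, z, w; split => //.
  by rewrite (ltn_trans hxy hyz) hwz.
- subst w.
  have : z != z.
    apply: (sub2_uniq hu); rewrite et' -(cat0s [:: z; z]).
    apply: cat_subseq; first exact: sub0seq.
    apply: (@cat_subseq _ [:: z] [:: z] [:: z]); first by rewrite sub1seq mem_head.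
    by rewrite sub1seq !inE mem_cat inE eqxx !orbT.
  by rewrite eqxx.
Qed.

Lemma L123 t x y z : uniq t -> subseq [:: x; y; z] t -> x < y -> x < z ->
  has12_3 t \/ exists a b c, subseq [:: a; c; b] t /\ a < b < c.
Proof.
move=> hu hs hxy hxz.
case: (ltngtP y z) => hyz.
- have [A [t2 [et hs2]]] := subseq_cons_split hs.
  have [B [C' [et2 hs3]]] := subseq_cons_split hs2.
  apply: (@L123_ind t A x z hu B y C') => //.
  + by rewrite et et2.
  + by rewrite -sub1seq.
  + by rewrite hxy hyz.
- by right; exists x, z, y; rewrite hxz hyz.
- subst z; have := subseq_uniq hs hu; by rewrite /= !inE eqxx /= andbF.
Qed.

Lemma SC_perm p u w : perm_eq (SC p u w) w.
Proof.
rewrite SCE; have [R [e1 e2]] := foldG p u w [::] [::].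
by rewrite e1.
Qed.

Lemma has12_3_sub t : has12_3 t -> exists a b c, subseq [:: a; b; c] t /\ a < b /\ a < c.
Proof.
move=> [M1 [a [b [M2 [c [e [hc /andP [hab hbc]]]]]]]].
exists a, b, c; split; last by split => //; apply: ltn_trans hab hbc.
case/splitPr: hc e => C1 C2 e.
rewrite e; exact: (sub3_split a b c M1 [::] C1 C2).
Qed.

Lemma sort_char t : uniq t -> perm_eq t (iota 1 (size t)) ->
  (west_s (SC [::3;2;1] [::false;true;true] t) = iota 1 (size t) <-> Pgood t).
Proof.
move=> hu hp.
have [I1 [I2 I3]] := sc_inv t.
have SCt : SC [::3;2;1] [::false;true;true] t =
   (foldl S3 ([::],[::]) t).2 ++ (foldl S3 ([::],[::]) t).1 by rewrite SCE.
have hsortI : sorted ltn (iota 1 (size t)) by apply: iota_ltn_sorted.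
split.
  move=> hw x y z hs; apply/negP => /andP [hxy hxz].
  have bad : forall w, has231 w -> SC [::3;2;1] [::false;true;true] t = w -> False.
    move=> w [b [c [a [hs' h]]]] ew.
    have := west_bad hs' h; rewrite -ew hw.
    by rewrite hsortI.
  have [h|h] := classic (has12_3 t).
    by apply: (bad _ (I3 h)).
  have ert : SC [::3;2;1] [::false;true;true] t = rev t by rewrite SCt I2.
  have [h'|[a [b [c [hs' hab]]]]] := L123 hu hs hxy hxz; first by apply: h.
  apply: (bad (rev t)) => //.
  exists b, c, a; split => //.
  by rewrite -subseq_rev revK.
move=> hg.
have hn : ~ has12_3 t.
  move/has12_3_sub => [a [b [c [hs [hab hac]]]]].
  by move: (hg _ _ _ hs); rewrite hab hac.
have ert : SC [::3;2;1] [::false;true;true] t = rev t by rewrite SCt I2.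
rewrite ert.
have hws : sorted ltn (west_s (rev t)).
  apply: west_good; first by rewrite rev_uniq.
  move=> b c a hs; apply/negP => /andP [hab hbc].
  move: hs; rewrite -subseq_rev revK /= => hs.
  by move: (hg _ _ _ hs); rewrite (ltn_trans hab hbc) hab.
apply: (irr_sorted_eq ltn_trans ltnn) => // v.
rewrite /west_s (perm_mem (SC_perm _ _ _)) mem_rev.
exact: (perm_mem hp).
Qed.

Lemma nthD (A s : seq nat) n : nth 0 (A ++ s) (size A + n) = nth 0 s n.
Proof. by rewrite nth_cat ltnNge leq_addr /= addKn. Qed.

Lemma sub3_idx (x y z : nat) t : subseq [:: x; y; z] t ->
  exists i j k, [/\ i < j < k, k < size t, x = nth 0 t i, y = nth 0 t j & z = nth 0 t k].
Proof.
move=> hs.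
have [A [t2 [et hs2]]] := subseq_cons_split hs.
have [B [t3 [et2 hs3]]] := subseq_cons_split hs2.
have [C [D [et3 _]]] := subseq_cons_split hs3.
subst t t2 t3.
exists (size A), (size A + (size B).+1), (size A + (size B).+1 + (size C).+1).
split.
- apply/andP; split; lia.
- by rewrite size_cat /= size_cat /= size_cat /=; lia.
- by rewrite nth_cat_size.
- by rewrite nthD /= nth_cat_size.
- by rewrite -addnA nthD addSn /= nthD /= nth_cat_size.
Qed.

Lemma closure_good pi tau : Pgood pi -> contains pi tau -> Pgood tau.
Proof.
move=> hg /vcontainsP [idx /and5P [/eqP hsz hs ha ho _]] x y z hsub.
have [i [j [k [/andP [hij hjk] hk ex ey ez]]]] := sub3_idx hsub.
have hj : j < size tau by apply: ltn_trans hjk hk.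
have hi : i < size tau by apply: ltn_trans hij hj.
set f := nth 0 pi.
have hcmp : forall a b, a < size tau -> b < size tau ->
    (f (nth 0 idx a) < f (nth 0 idx b)) = (nth 0 tau a < nth 0 tau b).
  move=> a b ha' hb'.
  rewrite -!(nth_map 0 0 f) ?hsz //.
  move: ho => /andP [_ /allP ho].
  have := ho a; rewrite mem_iota size_map hsz add0n ha' => /(_ isT) /allP /(_ b).
  by rewrite mem_iota add0n hb' => /(_ isT) /eqP.
have hmono := sorted_ltn_nth ltn_trans 0 hs.
have hIJ : nth 0 idx i < nth 0 idx j by apply: hmono => //; rewrite inE hsz.
have hJK : nth 0 idx j < nth 0 idx k by apply: hmono => //; rewrite inE hsz.
have hK : nth 0 idx k < size pi.
  by move/allP: ha; apply; apply: mem_nth; rewrite hsz.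
have hsub' : subseq [:: f (nth 0 idx i); f (nth 0 idx j); f (nth 0 idx k)] pi.
  rewrite -[X in subseq _ X](mkseq_nth 0 pi) /mkseq.
  apply: (map_subseq f (s1 := [:: nth 0 idx i; nth 0 idx j; nth 0 idx k])).
  apply: sorted_subseq_iota; first by rewrite /= hIJ hJK.
  by rewrite /= add0n hK (ltn_trans hJK hK) (ltn_trans hIJ (ltn_trans hJK hK)).
have := hg _ _ _ hsub'.
by rewrite !hcmp // -ex -ey -ez.
Qed.

Theorem mainTheorem16 :
  perm_class (Sort_SC [:: 3; 2; 1] [:: false; true; true]).
Proof.
split.
  by move=> pi [h1 [h2 _]].
move=> pi tau [hs [hp hw]] hts htp hc.
split => //; split => //.
have hu : forall s, is_perm s -> uniq s.
  by move=> s h; rewrite (perm_uniq h) iota_uniq.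
have gpi : Pgood pi by apply/(sort_char (hu _ hp) hp).
apply/(sort_char (hu _ htp) htp).
exact: closure_good gpi hc.
Qed.
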